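(* Let $\mathbf{k}$ be a field with algebraic closure $\overline{\mathbf{k}}$, let $p\ge3$ and $q\ge1$ be integers, and fix values $e_1,\dots,e_{qp}\in\mathbf{k}$. Let $f_0=t^q+e_pt^{q-1}+\cdots+e_{(q-1)p}t+e_{qp}$ and $f_i=e_it^{q-1}+e_{p+i}t^{q-2}+\cdots+e_{(q-1)p+i}$ for $1\le i\le p-1$, as polynomials in $\mathbf{k}[t]$. Then $f_0,f_1,\dots,f_{p-1}$ have a common root in $\overline{\mathbf{k}}$ if and only if for every $\mu=(\mu_1,\dots,\mu_{p-1})\in\overline{\mathbf{k}}^{p-1}$, the polynomials $f_0$ and $h_\mu=\sum_{i=1}^{p-1}\mu_if_i$ have a common root in $\overline{\mathbf{k}}$. *)

(* Defs.v *)
From HB Require Import structures.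
From mathcomp Require Import all_boot all_order all_algebra.
Set Implicit Arguments. Unset Strict Implicit. Unset Printing Implicit Defensive.
Import GRing.Theory.
Local Open Scope ring_scope.

Definition is_algebraic_closure (k : fieldType) (L : closedFieldType)
  (iota : {rmorphism k -> L}) : Prop :=
  forall x : L, exists2 P : {poly k}, P != 0 & root (map_poly iota P) x.

(* e : nat -> k, only the values e 1, ..., e (q*p) are used. *)
Definition f0 (k : fieldType) (e : nat -> k) (p q : nat) : {poly k} :=
  'X^q + \sum_(1 <= j < q.+1) e (j * p)%N *: 'X^(q - j).

Definition fi (k : fieldType) (e : nat -> k) (p q i : nat) : {poly k} :=
  \sum_(j < q) e (j * p + i)%N *: 'X^(q.-1 - j).

(* Main.v *)
Require Import Defs.
From HB Require Import structures.
From mathcomp Require Import all_boot all_order all_algebra.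
Import GRing.Theory.
Local Open Scope ring_scope.

Lemma f0_neq0 (k : fieldType) (e : nat -> k) (p q : nat) : (1 <= q)%N -> f0 e p q != 0.
Proof.
move=> hq; apply/eqP => /(congr1 (fun P : {poly k} => P`_q)).
rewrite /f0 coefD coefXn eqxx coef0 coef_sum big1_seq ?addr0; first by move/eqP; rewrite oner_eq0.
move=> j /andP[_]; rewrite mem_index_iota => /andP[hj1 hjq].
rewrite coefZ coefXn.
have -> : (q == q - j)%N = false by apply/negbTE; rewrite eq_sym neq_ltn; apply/orP; left; rewrite ltn_subrL; apply/andP; split.
by rewrite mulr0.
Qed.

Theorem lemma4p3 (k : fieldType) (L : closedFieldType)
  (iota : {rmorphism k -> L}) (hL : is_algebraic_closure iota)
  (p q : nat) (hp : (3 <= p)%N) (hq : (1 <= q)%N) (e : nat -> k) :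
  (exists x : L, root (map_poly iota (f0 e p q)) x /\
     forall i : nat, (1 <= i <= p.-1)%N -> root (map_poly iota (fi e p q i)) x)
  <->
  (forall mu : 'rV[L]_(p.-1),
     exists x : L, root (map_poly iota (f0 e p q)) x /\
       root (\sum_(i < p.-1) mu ord0 i *: map_poly iota (fi e p q i.+1)) x).
Proof.
set F := map_poly iota (f0 e p q).
set G := fun i => map_poly iota (fi e p q i).
split.
  move=> [x [hx hi]] mu; exists x; split => //.
  rewrite /root horner_sum; apply/eqP; apply: big1 => i _.
  rewrite hornerZ (eqP (hi i.+1 _)) ?mulr0 //.
  by rewrite /= (ltn_ord i).
move=> H.
have F0 : F != 0 by rewrite map_poly_eq0 f0_neq0.
have [rs Frs] := closed_field_poly_normal F.
have inrs : forall x, root F x -> x \in rs.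
  move=> x; rewrite Frs rootZ ?lead_coef_eq0 // root_prod_XsubC //.
set c := fun x (i : nat) => (G i.+1).[x].
pose good x := [forall i : 'I_(p.-1), c x i == 0].
case: (boolP (has good rs)) => [/hasP[x xr gx] | nog].
  exists x; split.
    by rewrite Frs rootZ ?lead_coef_eq0 // root_prod_XsubC.
  move=> i /andP[i1 ip].
  have hi' : (i.-1 < p.-1)%N by case: i i1 ip.
  have := forallP gx (Ordinal hi'); rewrite /c /G.
  by change (nat_of_ord (Ordinal hi')) with i.-1; rewrite prednK.
pose g x := \poly_(i < p.-1) c x i.
have gnz : forall x, x \in rs -> g x != 0.
  move=> x xr; apply/eqP => gx0; move/hasPn: nog => /(_ x xr) /forallP; apply => i.
  by have := congr1 (fun P : {poly L} => P`_i) gx0; rewrite coef_poly ltn_ord coef0 => ->.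
pose P := \prod_(x <- rs) g x.
have Pnz : P != 0 by rewrite prodf_seq_neq0; apply/allP => x xr; apply: gnz.
have [t ht] : exists t, P.[t] != 0.
  have /closed_rootP [t ht] : size ('X * P - 1) != 1%N.
    rewrite mulrC size_polyDl size_mulX //.
      by rewrite eqSS size_poly_eq0.
    by rewrite size_polyN size_poly1 ltnS lt0n size_poly_eq0.
  exists t; apply/negP => /eqP Pt; move: ht; rewrite /root hornerD hornerN hornerC hornerM Pt mulr0 sub0r oppr_eq0.
  by rewrite oner_eq0.
have [x [hx hmu]] := H (\row_i t ^+ i).
suff: P.[t] == 0 by rewrite (negbTE ht).
rewrite /P horner_prod prodf_seq_eq0.
apply/hasP; exists x; first exact: inrs.
move: hmu; rewrite /root horner_sum => /eqP hmu.
rewrite /= /g horner_poly; apply/eqP; rewrite -[RHS]hmu.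
by apply: eq_bigr => i _; rewrite hornerZ mxE mulrC.
Qed.
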